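(* The algebra $\mathtt{A}_5^{\{3,4\}}$ is wild.
   Context: $\Bbbk$ is an algebraically closed field; arrows compose right to left. $\mathtt{A}_n$ is the algebra of the quiver with vertices $1,\dots,n$, arrows $a_i:i\to i+1$, $b_i:i+1\to i$ ($1\le i\le n-1$), relations $a_ib_i=b_{i+1}a_{i+1}$ ($1\le i\le n-2$), $a_{n-1}b_{n-1}=0$. For $X\subset\{2,\dots,n\}$, $e_X$ is the sum of primitive idempotents for vertices in $\{1\}\cup X$ and $\mathtt{A}_n^X=e_X\mathtt{A}_ne_X$. *)

(* Defs.v *)
From HB Require Import structures.
From mathcomp Require Import all_boot all_order all_algebra.
From mathcomp Require Import mxtens.
Set Implicit Arguments. Unset Strict Implicit. Unset Printing Implicit Defensive.
Import GRing.Theory.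
Local Open Scope ring_scope.

(* The quiver Q_n: vertices 1..n, arrows a_i : i -> i+1, b_i : i+1 -> i.    *)
Inductive arr := Aa of nat | Bb of nat.

Definition src (x : arr) : nat := match x with Aa i => i | Bb i => i.+1 end.
Definition tgt (x : arr) : nat := match x with Aa i => i.+1 | Bb i => i end.
Definition arr_ok (n : nat) (x : arr) : bool :=
  match x with Aa i | Bb i => (1 <= i) && (i <= n.-1) end%N.

(* A path is a pair (v, w): starting vertex v and the list w of arrows in the
   order in which they are TRAVERSED (first arrow first).  In the paper's
   right-to-left notation the path (v, [:: x1; x2; ...; xm]) is xm ... x2 x1;
   (v, [::]) is the trivial path e_v. *)
Definition path := (nat * seq arr)%type.

Fixpoint walk (n v : nat) (w : seq arr) : bool :=
  match w with
  | [::] => (1 <= v <= n)%N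
  | x :: w' => (src x == v) && arr_ok n x && walk n (tgt x) w'
  end.

Definition is_path (n : nat) (p : path) : bool := walk n p.1 p.2.
Definition pstart (p : path) : nat := p.1.
Definition pend (p : path) : nat := last p.1 (map tgt p.2).
(* "first p, then q" = the product q p in the algebra *)
Definition pcat (p q : path) : path := (p.1, p.2 ++ q.2).

(* paths of e_X kQ_n e_X : both endpoints in {1} u X *)
Definition Spath (n : nat) (X : seq nat) (p : path) : bool :=
  is_path n p && (pstart p \in 1%N :: X) && (pend p \in 1%N :: X).

(* Unital algebra homomorphisms  A_n^X = e_X (kQ_n / I) e_X  -> T, where T  *)
(* is described by an equality, a product, a sum, 0 and 1.  The paths in     *)
(* Spath form a basis of e_X kQ_n e_X (multiplication = concatenation or 0,  *)
(* unit = sum of e_v, v in {1} u X), and e_X I e_X is spanned by the         *)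
(* elements u r w (u, w paths, r a defining relation) with endpoints in      *)
(* {1} u X; so a linear map given on paths is a unital algebra morphism       *)
(* from A_n^X iff the following hold.                                        *)
(*  relations: a_i b_i = b_{i+1} a_{i+1} (1 <= i <= n-2), a_{n-1} b_{n-1}=0. *)
(*  In traversal order a_i b_i = [:: Bb i; Aa i], b_{i+1}a_{i+1} =           *)
(*  [:: Aa i.+1; Bb i.+1], a_{n-1}b_{n-1} = [:: Bb n.-1; Aa n.-1].           *)
Definition is_rep_AnX {T : Type} (eqT : T -> T -> Prop) (mulT addT : T -> T -> T)
    (zeroT oneT : T) (n : nat) (X : seq nat) (rho : path -> T) : Prop :=
  [/\ eqT (foldr (fun v acc => addT (rho (v, [::])) acc) zeroT (1%N :: X)) oneT,
      (forall p q, Spath n X p -> Spath n X q -> pend p = pstart q ->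
          eqT (rho (pcat p q)) (mulT (rho q) (rho p))),
      (forall p q, Spath n X p -> Spath n X q -> pend p <> pstart q ->
          eqT (mulT (rho q) (rho p)) zeroT),
      (forall (i s : nat) (u w : seq arr), (1 <= i <= n - 2)%N ->
          Spath n X (s, u ++ [:: Bb i; Aa i] ++ w) ->
          eqT (rho (s, u ++ [:: Bb i; Aa i] ++ w))
              (rho (s, u ++ [:: Aa i.+1; Bb i.+1] ++ w)))
    & (forall (s : nat) (u w : seq arr),
          Spath n X (s, u ++ [:: Bb n.-1; Aa n.-1] ++ w) ->
          eqT (rho (s, u ++ [:: Bb n.-1; Aa n.-1] ++ w)) zeroT)].

(* Finite-dimensional A_n^X-modules: k^d with the action of each path given  *)
(* by a d x d matrix (acting on column vectors).                             *)
Section Modules.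
Variable k : fieldType.

Definition mod_iso (n : nat) (X : seq nat) (d d' : nat)
    (rho : path -> 'M[k]_d) (rho' : path -> 'M[k]_d') : Prop :=
  exists (P : 'M[k]_(d', d)) (Q : 'M[k]_(d, d')),
    [/\ P *m Q = 1%:M, Q *m P = 1%:M &
        forall p, Spath n X p -> P *m rho p = rho' p *m P].

Definition mod_indec (n : nat) (X : seq nat) (d : nat) (rho : path -> 'M[k]_d)
  : Prop :=
  (0 < d)%N /\
  forall E : 'M[k]_d, (forall p, Spath n X p -> E *m rho p = rho p *m E) ->
    E *m E = E -> E = 0 \/ E = 1%:M.

(* finite-dimensional k<x,y>-modules: k^m with two m x m matrices *)
Definition kxy_iso (m m' : nat) (X Y : 'M[k]_m) (X' Y' : 'M[k]_m') : Prop :=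
  exists (P : 'M[k]_(m', m)) (Q : 'M[k]_(m, m')),
    [/\ P *m Q = 1%:M, Q *m P = 1%:M, P *m X = X' *m P & P *m Y = Y' *m P].

Definition kxy_indec (m : nat) (X Y : 'M[k]_m) : Prop :=
  (0 < m)%N /\
  forall E : 'M[k]_m, E *m X = X *m E -> E *m Y = Y *m E ->
    E *m E = E -> E = 0 \/ E = 1%:M.

(* The free algebra k<x,y>: an element is a finite formal sum of terms       *)
(* c * w, with w a word in x (false) and y (true).  Two such sums are equal  *)
(* in k<x,y> iff all their word-coefficients agree.                          *)
Definition ncpoly := seq (k * seq bool)%type.
Definition nccoef (P : ncpoly) (w : seq bool) : k :=
  \sum_(t <- P | t.2 == w) t.1.
Definition nceq (P Q : ncpoly) : Prop := forall w, nccoef P w = nccoef Q w.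
Definition ncadd (P Q : ncpoly) : ncpoly := P ++ Q.
Definition ncmul (P Q : ncpoly) : ncpoly :=
  [seq (t.1 * s.1, t.2 ++ s.2) | t <- P, s <- Q].
Definition nczero : ncpoly := [::].
Definition ncone : ncpoly := [:: (1, [::])].

Definition ncmx_eq r (A B : 'M[ncpoly]_r) : Prop := forall i j, nceq (A i j) (B i j).
Definition ncmx_add r (A B : 'M[ncpoly]_r) : 'M[ncpoly]_r :=
  \matrix_(i, j) ncadd (A i j) (B i j).
Definition ncmx_mul r (A B : 'M[ncpoly]_r) : 'M[ncpoly]_r :=
  \matrix_(i, j) flatten [seq ncmul (A i l) (B l j) | l <- enum 'I_r].
Definition ncmx_zero r : 'M[ncpoly]_r := \matrix_(i, j) nczero.
Definition ncmx_one r : 'M[ncpoly]_r :=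
  \matrix_(i, j) (if i == j then ncone else nczero).

Definition ev_word m (X Y : 'M[k]_m) (w : seq bool) : 'M[k]_m :=
  foldr (fun (l : bool) M => (if l then Y else X) *m M) 1%:M w.
Definition ev_nc m (X Y : 'M[k]_m) (P : ncpoly) : 'M[k]_m :=
  \sum_(t <- P) t.1 *: ev_word X Y t.2.

(* A bimodule  M = k<x,y>^r  (free of rank r as right k<x,y>-module) with    *)
(* left A_n^X-action Phi : A_n^X -> M_r(k<x,y>) ; the functor M (x) - sends  *)
(* (k^m, X, Y) to k^r (x) k^m = k^(r*m), on which a path p acts by the block  *)
(* matrix ( Phi(p)_{ij}(X,Y) )_{i,j}.                                         *)
Definition tensor_act (r m : nat) (Phi : path -> 'M[ncpoly]_r) (X Y : 'M[k]_m)
    (p : path) : 'M[k]_(r * m) :=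
  \matrix_(i, j) ev_nc X Y (Phi p (mxtens_unindex i).1 (mxtens_unindex j).1)
                    (mxtens_unindex i).2 (mxtens_unindex j).2.

(* Wildness (standard definition, e.g. Drozd; Simson-Skowronski): there is an *)
(* A-k<x,y>-bimodule M, finitely generated and free as a right k<x,y>-module, *)
(* such that M (x)_{k<x,y>} - : mod k<x,y> -> mod A preserves                 *)
(* indecomposability and reflects isomorphism classes.                        *)
Definition wild_AnX (n : nat) (X : seq nat) : Prop :=
  exists (r : nat) (Phi : path -> 'M[ncpoly]_r),
    [/\ is_rep_AnX (@ncmx_eq r) (@ncmx_mul r) (@ncmx_add r) (ncmx_zero r)
          (ncmx_one r) n X Phi,
        (forall m (X0 Y0 : 'M[k]_m), kxy_indec X0 Y0 ->
            mod_indec n X (tensor_act Phi X0 Y0))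
      & (forall m m' (X0 Y0 : 'M[k]_m) (X1 Y1 : 'M[k]_m'),
            mod_iso n X (tensor_act Phi X0 Y0) (tensor_act Phi X1 Y1) ->
            kxy_iso X0 Y0 X1 Y1)].

End Modules.

(* Main.v *)
Require Import Defs.
From mathcomp Require Import all_boot all_order all_algebra mxtens.
Set Implicit Arguments. Unset Strict Implicit. Unset Printing Implicit Defensive.
Import GRing.Theory.
Local Open Scope ring_scope.

Section Main.
Variable k : fieldType.

Definition natf := nat -> nat -> nat.
Definition nm (f : natf) : 'M[k]_11 := \matrix_(i, j) (f i j)%:R.
Definition nsum (F : nat -> nat) : nat := foldr (fun l acc => (F l + acc)%N) 0%N (iota 0 11).
Definition nmul (f g : natf) : natf := fun i j => nsum (fun l => f i l * g l j)%N.
Definition nadd (f g : natf) : natf := fun i j => (f i j + g i j)%N.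
Definition f0 : natf := fun _ _ => 0%N.
Definition feq (f g : natf) : bool :=
  all (fun i => all (fun j => f i j == g i j) (iota 0 11)) (iota 0 11).
Definition fl (s : seq (nat * nat)) : natf := fun i j => nat_of_bool ((i, j) \in s).

Lemma sum_foldr (F : nat -> k) (s : seq nat) :
  \sum_(l <- s) F l = foldr (fun l acc => F l + acc) 0 s.
Proof. by elim: s => [|x s IH]; rewrite ?big_nil ?big_cons ?IH. Qed.

Lemma nsumE (F : nat -> nat) : (nsum F)%:R = \sum_(l < 11) (F l)%:R :> k.
Proof.
rewrite -(big_mkord xpredT (fun l => (F l)%:R)) /index_iota subn0 sum_foldr /nsum.
by elim: (iota 0 11) => [|x s IH] //=; rewrite natrD IH.
Qed.

Lemma nm_mul f g : nm f *m nm g = nm (nmul f g).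
Proof.
apply/matrixP => i j; rewrite !mxE /nmul nsumE.
by apply: eq_bigr => l _; rewrite !mxE natrM.
Qed.

Lemma nm_add f g : nm f + nm g = nm (nadd f g).
Proof. by apply/matrixP => i j; rewrite !mxE natrD. Qed.

Lemma nm0 : nm f0 = 0.
Proof. by apply/matrixP => i j; rewrite !mxE. Qed.

Lemma feqP f g : feq f g -> nm f = nm g.
Proof.
move=> /allP H; apply/matrixP => i j; rewrite !mxE.
have Hi : (i : nat) \in iota 0 11 by rewrite mem_iota /=.
have Hj : (j : nat) \in iota 0 11 by rewrite mem_iota /=.
by have /allP Hi' := H _ Hi; rewrite (eqP (Hi' _ Hj)).
Qed.


(* ---------- triples C + A x + B y ---------- *)
Record trip := Trip { tC : 'M[k]_11; tA : 'M[k]_11; tB : 'M[k]_11 }.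
Definition tmul (t u : trip) : trip :=
  Trip (tC t *m tC u) (tC t *m tA u + tA t *m tC u) (tC t *m tB u + tB t *m tC u).
Definition t1 : trip := Trip 1%:M 0 0.
Definition t0 : trip := Trip 0 0 0.

Lemma tmulA t u v : tmul t (tmul u v) = tmul (tmul t u) v.
Proof.
case: t u v => [c a b] [c' a' b'] [c'' a'' b'']; rewrite /tmul /=.
congr Trip; rewrite ?mulmxA //.
  by rewrite !mulmxDr !mulmxDl !mulmxA addrA.
by rewrite !mulmxDr !mulmxDl !mulmxA addrA.
Qed.

Lemma tmul1t t : tmul t1 t = t.
Proof. by case: t => c a b; rewrite /tmul /= !mul1mx !mul0mx !addr0. Qed.
Lemma tmult1 t : tmul t t1 = t.
Proof. by case: t => c a b; rewrite /tmul /= !mulmx1 !mulmx0 !add0r. Qed.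
Lemma tmul0t t : tmul t0 t = t0.
Proof. by case: t => c a b; rewrite /tmul /= !mul0mx !addr0. Qed.
Lemma tmult0 t : tmul t t0 = t0.
Proof. by case: t => c a b; rewrite /tmul /= !mulmx0 !addr0. Qed.

Definition ntrip := (natf * natf * natf)%type.
Definition nt (x : ntrip) : trip := Trip (nm x.1.1) (nm x.1.2) (nm x.2).
Definition tab (f : natf) : natf :=
  let t := [seq [seq f i j | j <- iota 0 11] | i <- iota 0 11] in
  fun i j => nth 0%N (nth [::] t i) j.
Lemma nm_tab f : nm (tab f) = nm f.
Proof.
apply/matrixP => i j; rewrite !mxE /tab.
rewrite (nth_map 0%N) ?size_iota // (nth_map 0%N) ?size_iota //.
by rewrite !nth_iota.
Qed.
Definition ntmul (x y : ntrip) : ntrip :=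
  (tab (nmul x.1.1 y.1.1), tab (nadd (nmul x.1.1 y.1.2) (nmul x.1.2 y.1.1)),
   tab (nadd (nmul x.1.1 y.2) (nmul x.2 y.1.1))).
Lemma nt_mul x y : tmul (nt x) (nt y) = nt (ntmul x y).
Proof. by rewrite /tmul /nt /ntmul /= !nm_tab !nm_mul !nm_add. Qed.
Definition ntfeq (x y : ntrip) := [&& feq x.1.1 y.1.1, feq x.1.2 y.1.2 & feq x.2 y.2].
Lemma ntfeqP x y : ntfeq x y -> nt x = nt y.
Proof. by case/and3P => /feqP H1 /feqP H2 /feqP H3; rewrite /nt H1 H2 H3. Qed.
Definition nz : ntrip := (f0, f0, f0).
Lemma nt0 : nt nz = t0.
Proof. by rewrite /nt /= nm0. Qed.
Definition cl (s : seq (nat * nat)) : ntrip := (fl s, f0, f0).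

Definition na1 := cl [:: (0,0); (1,1)]%N.
Definition nb1 := cl [:: (2,0); (3,1); (2,4); (3,5)]%N.
Definition na2 : ntrip := (fl [:: (6,1); (6,4); (7,5)]%N, fl [:: (7,0)]%N, fl [:: (7,1)]%N).
Definition nb2 := cl [:: (4,4); (5,5)]%N.
Definition na3 := cl [:: (8,4); (9,5); (10,6)]%N.
Definition nb3 := cl [:: (6,8); (7,9)]%N.
Definition na4 := cl [:: (10,8)]%N.
Definition nb4 := cl [:: (10,10)]%N.
Definition nev1 := cl [:: (0,0); (1,1); (2,2); (3,3)]%N.
Definition nev3 := cl [:: (4,4); (5,5); (6,6); (7,7)]%N.
Definition nev4 := cl [:: (8,8); (9,9); (10,10)]%N.

Definition narr (x : arr) : ntrip :=
  match x with
  | Aa 1 => na1 | Aa 2 => na2 | Aa 3 => na3 | Aa 4 => na4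
  | Bb 1 => nb1 | Bb 2 => nb2 | Bb 3 => nb3 | Bb 4 => nb4
  | _ => nz end.
Definition nvtx (v : nat) : ntrip :=
  match v with 1 => nev1 | 3 => nev3 | 4 => nev4 | _ => nz end.

Definition ntprod (w : seq arr) : ntrip := foldl (fun acc x => ntmul (narr x) acc) (fl [seq (i,i) | i <- iota 0 11], f0, f0) w.
Definition tprod (w : seq arr) : trip := foldl (fun acc x => tmul (nt (narr x)) acc) t1 w.
Definition sem (p : Defs.path) : trip := tmul (tprod p.2) (nt (nvtx p.1)).

Lemma tprod_cat u w : tprod (u ++ w) = tmul (tprod w) (tprod u).
Proof.
rewrite /tprod foldl_cat; move: (foldl _ t1 u) => t.
elim: w t => [|x w IH] t /=; first by rewrite tmul1t.
by rewrite IH [in RHS]IH tmult1 tmulA.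
Qed.

Lemma nt1 : nt (fl [seq (i,i) | i <- iota 0 11], f0, f0) = t1.
Proof.
rewrite /nt /t1 /= !nm0; congr Trip; apply/matrixP => i j; rewrite !mxE.
rewrite /fl.
have -> : ((i : nat, j : nat) \in [seq (x,x) | x <- iota 0 11]) = (i == j).
  apply/mapP/eqP => [[x _ [E1 E2]]|->]; first by apply: val_inj; rewrite /= E1 E2.
  by exists (j : nat) => //; rewrite mem_iota /=.
by [].
Qed.

Lemma tprod_nt w : tprod w = nt (ntprod w).
Proof.
rewrite /tprod /ntprod -nt1; move: (fl _, f0, f0) => y.
by elim: w y => [|x w IH] y //=; rewrite nt_mul IH.
Qed.

Definition nsem (p : Defs.path) : ntrip := ntmul (ntprod p.2) (nvtx p.1).
Lemma sem_nt p : sem p = nt (nsem p).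
Proof. by rewrite /sem /nsem tprod_nt nt_mul. Qed.


(* ---------- goodness (no product of two variables ever appears) ---------- *)
Definition Lf : natf := fl [:: (6,6); (7,7); (10,10)]%N.
Definition L : 'M[k]_11 := nm Lf.
Definition good (t : trip) : Prop :=
  [/\ L *m tA t = tA t, tA t *m L = 0, L *m tB t = tB t, tB t *m L = 0
    & L *m tC t *m L = tC t *m L].

Lemma LL : L *m L = L.
Proof. by rewrite /L nm_mul; apply: feqP; vm_compute. Qed.

Lemma good_mul t u : good t -> good u -> good (tmul t u).
Proof.
case: t u => [c a b] [c' a' b'] [/= Ha1 Ha2 Hb1 Hb2 Hc] [/= Ha1' Ha2' Hb1' Hb2' Hc'].
split => /=.
- rewrite mulmxDr !mulmxA; congr (_ + _); last by rewrite Ha1.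
  by rewrite -Ha1' !mulmxA -Hc.
- rewrite mulmxDl -!mulmxA Ha2' mulmx0 add0r.
  by rewrite -Hc' !mulmxA Ha2 !mul0mx.
- rewrite mulmxDr !mulmxA; congr (_ + _); last by rewrite Hb1.
  by rewrite -Hb1' !mulmxA -Hc.
- rewrite mulmxDl -!mulmxA Hb2' mulmx0 add0r.
  by rewrite -Hc' !mulmxA Hb2 !mul0mx.
- by rewrite -!mulmxA -Hc' !mulmxA -Hc.
Qed.

Definition ngood (x : ntrip) : bool :=
  [&& feq (nmul Lf x.1.2) x.1.2, feq (nmul x.1.2 Lf) f0, feq (nmul Lf x.2) x.2,
      feq (nmul x.2 Lf) f0 & feq (nmul (nmul Lf x.1.1) Lf) (nmul x.1.1 Lf)].

Lemma ngoodP x : ngood x -> good (nt x).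
Proof.
case/and5P => /feqP H1 /feqP H2 /feqP H3 /feqP H4 /feqP H5.
by split; rewrite /= /L ?nm_mul ?H1 ?H2 ?H3 ?H4 ?H5 ?nm0.
Qed.

Lemma good_arr x : good (nt (narr x)).
Proof.
apply: ngoodP.
case: x => [[|[|[|[|[|i]]]]]|[|[|[|[|[|i]]]]]]; by vm_compute.
Qed.

Lemma good_vtx v : good (nt (nvtx v)).
Proof. apply: ngoodP; case: v => [|[|[|[|[|v]]]]]; by vm_compute. Qed.

Lemma good_t1 : good t1.
Proof.
split; rewrite /= ?mulmx0 ?mul0mx //.
by rewrite mulmx1 mul1mx LL.
Qed.

Lemma good_tprod w : good (tprod w).
Proof.
rewrite /tprod; have : good t1 := good_t1; move: t1.
elim: w => [|x w IH] t Ht //=; apply: IH; exact: good_mul (good_arr x) Ht.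
Qed.

Lemma good_sem p : good (sem p).
Proof. exact: good_mul (good_tprod _) (good_vtx _). Qed.


Definition enc (t : trip) : 'M[ncpoly k]_11 :=
  \matrix_(i, j) [:: (tC t i j, [::]); (tA t i j, [:: false]); (tB t i j, [:: true])].

Lemma nccoef_nil w : nccoef (nil : ncpoly k) w = 0.
Proof. by rewrite /nccoef big_nil. Qed.
Lemma nccoef_cons (x : k * seq bool) P w :
  nccoef (x :: P) w = (if x.2 == w then x.1 else 0) + nccoef P w.
Proof. by rewrite /nccoef big_cons; case: ifP; rewrite ?add0r. Qed.
Lemma nccoef_cat (P Q : ncpoly k) w : nccoef (P ++ Q) w = nccoef P w + nccoef Q w.
Proof. by rewrite /nccoef big_cat. Qed.
Lemma nccoef_flatten (T : Type) (f : T -> ncpoly k) s w :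
  nccoef (flatten [seq f l | l <- s]) w = \sum_(l <- s) nccoef (f l) w.
Proof.
elim: s => [|x s IH] /=; first by rewrite big_nil nccoef_nil.
by rewrite nccoef_cat IH big_cons.
Qed.

Lemma nccoef_enc t i j w :
  nccoef (enc t i j) w = (if [::] == w then tC t i j else 0)
    + (if [:: false] == w then tA t i j else 0) + (if [:: true] == w then tB t i j else 0).
Proof. by rewrite mxE !nccoef_cons nccoef_nil addr0 addrA. Qed.

Lemma sum_if (b : bool) (F : 'I_11 -> k) :
  \sum_(l < 11) (if b then F l else 0) = if b then \sum_(l < 11) F l else 0.
Proof. by case: b => //; rewrite big1. Qed.

Lemma enc_mul t u : good t -> good u ->
  ncmx_eq (ncmx_mul (enc t) (enc u)) (enc (tmul t u)).
Proof.
case: t u => [c a b] [c' a' b'] [/= Ha1 Ha2 Hb1 Hb2 Hc] [/= Ha1' Ha2' Hb1' Hb2' Hc'].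
have AA : a *m a' = 0 by rewrite -Ha1' mulmxA Ha2 mul0mx.
have AB : a *m b' = 0 by rewrite -Hb1' mulmxA Ha2 mul0mx.
have BA : b *m a' = 0 by rewrite -Ha1' mulmxA Hb2 mul0mx.
have BB : b *m b' = 0 by rewrite -Hb1' mulmxA Hb2 mul0mx.
move=> i j w; rewrite mxE nccoef_flatten nccoef_enc /=.
have E : forall l, nccoef (ncmul (enc (Trip c a b) i l) (enc (Trip c' a' b') l j)) w =
   (if [::] == w then c i l * c' l j else 0)
 + (if [:: false] == w then c i l * a' l j + a i l * c' l j else 0)
 + (if [:: true] == w then c i l * b' l j + b i l * c' l j else 0)
 + (if [:: false; false] == w then a i l * a' l j else 0)
 + (if [:: false; true] == w then a i l * b' l j else 0)
 + (if [:: true; false] == w then b i l * a' l j else 0)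
 + (if [:: true; true] == w then b i l * b' l j else 0).
  move=> l; rewrite /ncmul !mxE /= !nccoef_cons nccoef_nil /=.
  by case: w => [|[] [|[] [|? ?]]] /=; rewrite ?(addr0, add0r).
rewrite (eq_bigr _ (fun l _ => E l)) /= {E}.
rewrite big_enum /= !big_split /= !sum_if.
have mE : forall (M N : 'M[k]_11), \sum_(l < 11) M i l * N l j = (M *m N) i j.
  by move=> M N; rewrite mxE.
rewrite !mE AA AB BA BB !mxE !big_split /=.
by case: w => [|[] [|[] [|? ?]]] /=; rewrite ?(addr0, add0r).
Qed.


Definition Phi (p : Defs.path) : 'M[ncpoly k]_11 := enc (sem p).

Lemma ncmx_eq_refl (A : 'M[ncpoly k]_11) : ncmx_eq A A.
Proof. by []. Qed.
Lemma ncmx_eq_sym (A B : 'M[ncpoly k]_11) : ncmx_eq A B -> ncmx_eq B A.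
Proof. by move=> H i j w; rewrite H. Qed.
Lemma ncmx_eq_trans (A B C : 'M[ncpoly k]_11) : ncmx_eq A B -> ncmx_eq B C -> ncmx_eq A C.
Proof. by move=> H1 H2 i j w; rewrite H1 H2. Qed.

Lemma enc_t0 : ncmx_eq (enc t0) (ncmx_zero k 11).
Proof.
move=> i j w; rewrite nccoef_enc /= !mxE /nczero nccoef_nil.
by case: ifP; case: ifP; case: ifP; rewrite ?addr0.
Qed.


Lemma proj_arr x : tgt x \in [:: 1; 3; 4]%N ->
  tmul (nt (nvtx (tgt x))) (nt (narr x)) = nt (narr x).
Proof.
rewrite nt_mul.
case: x => [[|[|[|[|[|i]]]]]|[|[|[|[|[|i]]]]]] //= _; apply: ntfeqP; by vm_compute.
Qed.

Lemma proj_vtx v : v \in [:: 1; 3; 4]%N ->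
  tmul (nt (nvtx v)) (nt (nvtx v)) = nt (nvtx v).
Proof.
rewrite nt_mul; case: v => [|[|[|[|[|v]]]]] //= _; apply: ntfeqP; by vm_compute.
Qed.

Lemma orth_vtx v v' : v \in [:: 1; 3; 4]%N -> v' \in [:: 1; 3; 4]%N -> v <> v' ->
  tmul (nt (nvtx v)) (nt (nvtx v')) = t0.
Proof.
rewrite nt_mul -nt0.
case: v => [|[|[|[|[|v]]]]] //= _; case: v' => [|[|[|[|[|v']]]]] //= _ _;
  apply: ntfeqP; by vm_compute.
Qed.

Lemma proj_sem p : pend p \in [:: 1; 3; 4]%N ->
  tmul (nt (nvtx (pend p))) (sem p) = sem p.
Proof.
case: p => v w; rewrite /pend /=; case/lastP: w => [|w x] /=.
  by move=> H; rewrite /sem /= tmul1t proj_vtx.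
rewrite map_rcons last_rcons => H.
rewrite /sem /= -cats1 tprod_cat /=.
have -> : tprod [:: x] = nt (narr x) by rewrite /tprod /= tmult1.
by rewrite !tmulA proj_arr.
Qed.

Lemma sem_pcat p q : pend p \in [:: 1; 3; 4]%N -> pend p = pstart q ->
  sem (pcat p q) = tmul (sem q) (sem p).
Proof.
move=> Hp Hpq; have H := proj_sem Hp; rewrite Hpq /pstart in H.
have -> : sem (pcat p q) = tmul (tprod q.2) (sem p).
  by rewrite /sem /pcat /= tprod_cat tmulA.
by rewrite -[in LHS]H tmulA /sem.
Qed.


Lemma sem_triv v : sem (v, [::]) = nt (nvtx v).
Proof. by rewrite /sem /= tmul1t. Qed.

Lemma tprod_rel1 : tprod [:: Bb 1; Aa 1] = tprod [:: Aa 2; Bb 2].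
Proof. rewrite !tprod_nt; apply: ntfeqP; vm_compute; reflexivity. Qed.
Lemma tprod_rel2 : tprod [:: Bb 2; Aa 2] = tprod [:: Aa 3; Bb 3].
Proof. rewrite !tprod_nt; apply: ntfeqP; vm_compute; reflexivity. Qed.
Lemma tprod_rel3 : tprod [:: Bb 3; Aa 3] = tprod [:: Aa 4; Bb 4].
Proof. rewrite !tprod_nt; apply: ntfeqP; vm_compute; reflexivity. Qed.
Lemma tprod_rel i : (1 <= i <= 3)%N ->
  tprod [:: Bb i; Aa i] = tprod [:: Aa i.+1; Bb i.+1].
Proof.
case: i => [|[|[|[|i]]]] Hi;
  [discriminate Hi | exact: tprod_rel1 | exact: tprod_rel2 | exact: tprod_rel3 | discriminate Hi].
Qed.

Lemma tprod_rel0 : tprod [:: Bb 4; Aa 4] = t0.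
Proof. rewrite tprod_nt -nt0; apply: ntfeqP; by vm_compute. Qed.

Lemma nm_id : nm (fl [seq (i,i) | i <- iota 0 11]) = 1%:M.
Proof. exact: (congr1 tC nt1). Qed.

Lemma sem_cat3 s u v w : sem (s, u ++ v ++ w) =
  tmul (tmul (tmul (tprod w) (tprod v)) (tprod u)) (nt (nvtx s)).
Proof. by rewrite /sem /= !tprod_cat. Qed.

Lemma Phi_rep : is_rep_AnX (@ncmx_eq k 11) (@ncmx_mul k 11) (@ncmx_add k 11)
  (ncmx_zero k 11) (ncmx_one k 11) 5 [:: 3; 4]%N Phi.
Proof.
split.
- have Hs : nm (nvtx 1).1.1 + (nm (nvtx 3).1.1 + nm (nvtx 4).1.1) = 1%:M.
    by rewrite !nm_add -nm_id; apply: feqP; vm_compute.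
  move=> i j w; have Hij := congr1 (fun M : 'M[k]_11 => M i j) Hs.
  rewrite !mxE /= in Hij; rewrite /= /Phi !sem_triv !mxE.
  rewrite !nccoef_cat !nccoef_cons /= /nczero !nccoef_nil /f0 !mulr0n.
  rewrite !if_same !addr0.
  case: (i == j) in Hij *; rewrite /ncone ?nccoef_cons ?nccoef_nil /= ?addr0;
    case: ifP => _; rewrite ?addr0 ?add0r ?Hij //.
- move=> p q /andP [_ Hp] _ Hpq; rewrite /Phi sem_pcat //.
  by apply: ncmx_eq_sym; apply: enc_mul; apply: good_sem.
- move=> p q /andP [_ Hp] /andP [/andP [_ Hq] _] Hpq.
  apply: (ncmx_eq_trans (enc_mul (good_sem q) (good_sem p))).
  have -> : tmul (sem q) (sem p) = t0; last exact: enc_t0.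
  rewrite -(proj_sem Hp) /sem -tmulA [X in tmul _ X]tmulA orth_vtx //.
    by rewrite tmul0t tmult0.
  by move=> E; apply: Hpq; rewrite /pstart E.
- by move=> i s u w Hi _; rewrite /Phi !sem_cat3 tprod_rel.
- move=> s u w _; rewrite /Phi sem_cat3 tprod_rel0 tmult0 tmul0t tmul0t.
  exact: enc_t0.
Qed.


Definition blk m m' (P : 'M[k]_(11 * m', 11 * m)) (i j : nat) : 'M[k]_(m', m) :=
  \matrix_(s, t) P (mxtens_index (inord i, s)) (mxtens_index (inord j, t)).

Lemma blk_mul a b c (M : 'M[k]_(11 * a, 11 * b)) (N : 'M[k]_(11 * b, 11 * c)) i j :
  blk (M *m N) i j = \sum_(l < 11) blk M i l *m blk N l j.
Proof.
apply/matrixP => s t; rewrite !mxE summxE.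
rewrite (reindex (@mxtens_index 11 b)) /=; last first.
  by exists (@mxtens_unindex 11 b) => x _; [apply: mxtens_indexK | apply: mxtens_unindexK].
pose G := fun (l : 'I_11) (u : 'I_b) => M (mxtens_index (inord i, s)) (mxtens_index (l, u))
   * N (mxtens_index (l, u)) (mxtens_index (inord j, t)).
rewrite (eq_bigr (fun p => G p.1 p.2)); last by case.
rewrite -pair_bigA /=.
apply: eq_bigr => l _; rewrite !mxE; apply: eq_bigr => u _.
by rewrite !mxE inord_val.
Qed.

Lemma blk_tensor m (X Y : 'M[k]_m) p i j :
  blk (tensor_act Phi X Y p) i j = ev_nc X Y (Phi p (inord i) (inord j)).
Proof. by apply/matrixP => s t; rewrite !mxE !mxtens_indexK. Qed.

Lemma ev_enc m (X Y : 'M[k]_m) t i j :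
  ev_nc X Y (enc t i j) = tC t i j *: 1%:M + tA t i j *: X + tB t i j *: Y.
Proof.
rewrite /ev_nc mxE !big_cons big_nil /= addr0 mulmx1.
by rewrite /ev_word /= mulmx1 addrA.
Qed.

Lemma blk_nt m (X Y : 'M[k]_m) p x i j : sem p = nt x -> (i < 11)%N -> (j < 11)%N ->
  blk (tensor_act Phi X Y p) i j =
  (x.1.1 i j)%:R *: 1%:M + (x.1.2 i j)%:R *: X + (x.2 i j)%:R *: Y.
Proof.
move=> Hs Hi Hj; rewrite blk_tensor /Phi Hs ev_enc /nt /= !mxE.
by rewrite !inordK.
Qed.

Lemma sum_pick m m' (F : nat -> 'M[k]_(m', m)) n : (n < 11)%N ->
  \sum_(l < 11) ((l : nat) == n)%:R *: F l = F n.
Proof.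
move=> Hn; rewrite (bigD1 (Ordinal Hn)) //= eqxx scale1r big1 ?addr0 // => l ne.
suff -> : ((l : nat) == n) = false by rewrite scale0r.
by apply/negbTE; apply: contra ne => /eqP E; apply/eqP/val_inj.
Qed.

Lemma sumR m m' (F : nat -> 'M[k]_(m', m)) s j : uniq s -> all (fun x => x.1 < 11)%N s ->
  \sum_(l < 11) (fl s l j)%:R *: F l = \sum_(x <- s | x.2 == j) F x.1.
Proof.
elim: s => [|x s IH] /=.
  by move=> _ _; rewrite big_nil big1 // => l _; rewrite /fl in_nil scale0r.
case/andP => Hx Hu /andP [Hx1 Ha]; rewrite big_cons -IH //.
have E : forall l : 'I_11, (fl (x :: s) l j)%:R *: F l =
    ((l : nat) == x.1)%:R *: ((x.2 == j)%:R *: F l) + (fl s l j)%:R *: F l.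
  move=> l; rewrite /fl in_cons scalerA -natrM -scalerDl -natrD; congr (_%:R *: _).
  case: x Hx Hx1 => x1 x2 /= Hx Hx1.
  case: (boolP ((l : nat, j) == (x1, x2))) => [/eqP [-> ->]|ne] /=.
    by rewrite (negbTE Hx) !eqxx.
  case: (boolP ((l : nat) == x1)) => [/eqP El|] //=; case: (boolP (x2 == j)) => [/eqP Ej|] //=.
  by case/eqP: ne; rewrite El Ej.
rewrite (eq_bigr _ (fun l _ => E l)) big_split /= (sum_pick (fun l => (x.2 == j)%:R *: F l)) //.
by case: (x.2 == j); rewrite ?scale1r ?scale0r ?add0r.
Qed.

Lemma sumL m m' (F : nat -> 'M[k]_(m', m)) s i : uniq s -> all (fun x => x.2 < 11)%N s ->
  \sum_(l < 11) (fl s i l)%:R *: F l = \sum_(x <- s | x.1 == i) F x.2.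
Proof.
move=> Hu Ha.
have -> : \sum_(l < 11) (fl s i l)%:R *: F l =
   \sum_(l < 11) (fl [seq (y.2, y.1) | y <- s] l i)%:R *: F l.
  apply: eq_bigr => l _; congr (_%:R *: _); rewrite /fl; congr nat_of_bool.
  apply/idP/mapP => [H|[[y1 y2] Hy [-> ->]] //]; by exists (i, l : nat).
rewrite sumR ?big_map //; first by rewrite map_inj_uniq // => -[? ?] [? ?] [-> ->].
by rewrite all_map.
Qed.


Definition wfl (s : seq (nat * nat)) :=
  uniq s && all (fun x => (x.1 < 11) && (x.2 < 11))%N s.

Lemma comm_blk m m' (X0 Y0 : 'M[k]_m) (X1 Y1 : 'M[k]_m') (P : 'M[k]_(11 * m', 11 * m))
  p c a b : P *m tensor_act Phi X0 Y0 p = tensor_act Phi X1 Y1 p *m P ->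
  sem p = nt (fl c, fl a, fl b) -> [&& wfl c, wfl a & wfl b] ->
  forall i j, (i < 11)%N -> (j < 11)%N ->
  \sum_(x <- c | x.2 == j) blk P i x.1 + \sum_(x <- a | x.2 == j) blk P i x.1 *m X0
    + \sum_(x <- b | x.2 == j) blk P i x.1 *m Y0
  = \sum_(x <- c | x.1 == i) blk P x.2 j + \sum_(x <- a | x.1 == i) X1 *m blk P x.2 j
    + \sum_(x <- b | x.1 == i) Y1 *m blk P x.2 j.
Proof.
move=> H Hs /and3P [/andP [uc wc] /andP [ua wa] /andP [ub wb]] i j Hi Hj.
have wc1 : all (fun x => x.1 < 11)%N c by apply: sub_all wc => x /andP [].
have wc2 : all (fun x => x.2 < 11)%N c by apply: sub_all wc => x /andP [].
have wa1 : all (fun x => x.1 < 11)%N a by apply: sub_all wa => x /andP [].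
have wa2 : all (fun x => x.2 < 11)%N a by apply: sub_all wa => x /andP [].
have wb1 : all (fun x => x.1 < 11)%N b by apply: sub_all wb => x /andP [].
have wb2 : all (fun x => x.2 < 11)%N b by apply: sub_all wb => x /andP [].
have := congr1 (fun M => blk M i j) H; rewrite /= !blk_mul.
rewrite (eq_bigr (fun l : 'I_11 => (fl c l j)%:R *: blk P i l + (fl a l j)%:R *: (blk P i l *m X0)
   + (fl b l j)%:R *: (blk P i l *m Y0))); last first.
  move=> l _; rewrite (blk_nt _ _ Hs) //= !mulmxDr -!scalemxAr mulmx1 //.
rewrite [in X in _ = X](eq_bigr (fun l : 'I_11 => (fl c i l)%:R *: blk P l j
   + (fl a i l)%:R *: (X1 *m blk P l j) + (fl b i l)%:R *: (Y1 *m blk P l j))); last first.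
  move=> l _; rewrite (blk_nt _ _ Hs) //= !mulmxDl -!scalemxAl mul1mx //.
rewrite !big_split /=.
rewrite (sumR (fun l => blk P i l)) // (sumR (fun l => blk P i l *m X0)) //.
rewrite (sumR (fun l => blk P i l *m Y0)) //.
rewrite (sumL (fun l => blk P l j)) // (sumL (fun l => X1 *m blk P l j)) //.
by rewrite (sumL (fun l => Y1 *m blk P l j)).
Qed.


Definition p_e1 : Defs.path := (1, [::])%N.
Lemma sem_e1 : sem p_e1 = nt (fl [:: (0,0); (1,1); (2,2); (3,3)]%N, fl [::]%N, fl [::]%N).
Proof. by rewrite sem_nt; apply: ntfeqP; vm_compute. Qed.
Lemma sp_e1 : Spath 5 [:: 3; 4]%N p_e1.
Proof. by []. Qed.
Lemma wf_e1 : [&& wfl [:: (0,0); (1,1); (2,2); (3,3)]%N, wfl [::]%N & wfl [::]%N].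
Proof. by []. Qed.
Definition p_e3 : Defs.path := (3, [::])%N.
Lemma sem_e3 : sem p_e3 = nt (fl [:: (4,4); (5,5); (6,6); (7,7)]%N, fl [::]%N, fl [::]%N).
Proof. by rewrite sem_nt; apply: ntfeqP; vm_compute. Qed.
Lemma sp_e3 : Spath 5 [:: 3; 4]%N p_e3.
Proof. by []. Qed.
Lemma wf_e3 : [&& wfl [:: (4,4); (5,5); (6,6); (7,7)]%N, wfl [::]%N & wfl [::]%N].
Proof. by []. Qed.
Definition p_e4 : Defs.path := (4, [::])%N.
Lemma sem_e4 : sem p_e4 = nt (fl [:: (8,8); (9,9); (10,10)]%N, fl [::]%N, fl [::]%N).
Proof. by rewrite sem_nt; apply: ntfeqP; vm_compute. Qed.
Lemma sp_e4 : Spath 5 [:: 3; 4]%N p_e4.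
Proof. by []. Qed.
Lemma wf_e4 : [&& wfl [:: (8,8); (9,9); (10,10)]%N, wfl [::]%N & wfl [::]%N].
Proof. by []. Qed.
Definition p_l : Defs.path := (1, [:: Aa 1; Bb 1])%N.
Lemma sem_l : sem p_l = nt (fl [:: (2,0); (3,1)]%N, fl [::]%N, fl [::]%N).
Proof. by rewrite sem_nt; apply: ntfeqP; vm_compute. Qed.
Lemma sp_l : Spath 5 [:: 3; 4]%N p_l.
Proof. by []. Qed.
Lemma wf_l : [&& wfl [:: (2,0); (3,1)]%N, wfl [::]%N & wfl [::]%N].
Proof. by []. Qed.
Definition p_be : Defs.path := (3, [:: Bb 2; Bb 1])%N.
Lemma sem_be : sem p_be = nt (fl [:: (2,4); (3,5)]%N, fl [::]%N, fl [::]%N).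
Proof. by rewrite sem_nt; apply: ntfeqP; vm_compute. Qed.
Lemma sp_be : Spath 5 [:: 3; 4]%N p_be.
Proof. by []. Qed.
Lemma wf_be : [&& wfl [:: (2,4); (3,5)]%N, wfl [::]%N & wfl [::]%N].
Proof. by []. Qed.
Definition p_dg : Defs.path := (3, [:: Aa 3; Bb 3])%N.
Lemma sem_dg : sem p_dg = nt (fl [:: (6,4); (7,5)]%N, fl [::]%N, fl [::]%N).
Proof. by rewrite sem_nt; apply: ntfeqP; vm_compute. Qed.
Lemma sp_dg : Spath 5 [:: 3; 4]%N p_dg.
Proof. by []. Qed.
Lemma wf_dg : [&& wfl [:: (6,4); (7,5)]%N, wfl [::]%N & wfl [::]%N].
Proof. by []. Qed.
Definition p_de : Defs.path := (4, [:: Bb 3])%N.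
Lemma sem_de : sem p_de = nt (fl [:: (6,8); (7,9)]%N, fl [::]%N, fl [::]%N).
Proof. by rewrite sem_nt; apply: ntfeqP; vm_compute. Qed.
Lemma sp_de : Spath 5 [:: 3; 4]%N p_de.
Proof. by []. Qed.
Lemma wf_de : [&& wfl [:: (6,8); (7,9)]%N, wfl [::]%N & wfl [::]%N].
Proof. by []. Qed.
Definition p_ga : Defs.path := (3, [:: Aa 3])%N.
Lemma sem_ga : sem p_ga = nt (fl [:: (8,4); (9,5); (10,6)]%N, fl [::]%N, fl [::]%N).
Proof. by rewrite sem_nt; apply: ntfeqP; vm_compute. Qed.
Lemma sp_ga : Spath 5 [:: 3; 4]%N p_ga.
Proof. by []. Qed.
Lemma wf_ga : [&& wfl [:: (8,4); (9,5); (10,6)]%N, wfl [::]%N & wfl [::]%N].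
Proof. by []. Qed.
Definition p_gal : Defs.path := (1, [:: Aa 1; Aa 2; Aa 3])%N.
Lemma sem_gal : sem p_gal = nt (fl [:: (10,1)]%N, fl [::]%N, fl [::]%N).
Proof. by rewrite sem_nt; apply: ntfeqP; vm_compute. Qed.
Lemma sp_gal : Spath 5 [:: 3; 4]%N p_gal.
Proof. by []. Qed.
Lemma wf_gal : [&& wfl [:: (10,1)]%N, wfl [::]%N & wfl [::]%N].
Proof. by []. Qed.
Definition p_gdg : Defs.path := (3, [:: Aa 3; Bb 3; Aa 3])%N.
Lemma sem_gdg : sem p_gdg = nt (fl [:: (10,4)]%N, fl [::]%N, fl [::]%N).
Proof. by rewrite sem_nt; apply: ntfeqP; vm_compute. Qed.
Lemma sp_gdg : Spath 5 [:: 3; 4]%N p_gdg.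
Proof. by []. Qed.
Lemma wf_gdg : [&& wfl [:: (10,4)]%N, wfl [::]%N & wfl [::]%N].
Proof. by []. Qed.
Definition p_al : Defs.path := (1, [:: Aa 1; Aa 2])%N.
Lemma sem_al : sem p_al = nt (fl [:: (6,1)]%N, fl [:: (7,0)]%N, fl [:: (7,1)]%N).
Proof. by rewrite sem_nt; apply: ntfeqP; vm_compute. Qed.
Lemma sp_al : Spath 5 [:: 3; 4]%N p_al.
Proof. by []. Qed.
Lemma wf_al : [&& wfl [:: (6,1)]%N, wfl [:: (7,0)]%N & wfl [:: (7,1)]%N].
Proof. by []. Qed.


Definition isfree (i j : nat) : bool :=
  [|| ((i == 2) || (i == 3)) && ((j == 0) || (j == 1)),
      ((i == 6) || (i == 7)) && ((j == 4) || (j == 5))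
    | (i == 10) && ((j == 8) || (j == 9))]%N.

Ltac sE E i j := move: (E i j erefl erefl);
  rewrite /= ?big_cons ?big_nil /= ?addr0 ?add0r.
Ltac fin := first [ by move=> -> | by move=> <- | by [] ].

Lemma inter_struct m m' (X0 Y0 : 'M[k]_m) (X1 Y1 : 'M[k]_m') (P : 'M[k]_(11 * m', 11 * m)) :
  (forall p, Spath 5 [:: 3; 4]%N p -> P *m tensor_act Phi X0 Y0 p = tensor_act Phi X1 Y1 p *m P) ->
  [/\ blk P 0 0 *m X0 = X1 *m blk P 0 0, blk P 0 0 *m Y0 = Y1 *m blk P 0 0 &
   forall i j, (i < 11)%N -> (j < 11)%N -> ~~ isfree i j ->
     blk P i j = if i == j then blk P 0 0 else 0].
Proof.
move=> H.
have Ee1 := comm_blk (H _ sp_e1) sem_e1 wf_e1.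
have Ee3 := comm_blk (H _ sp_e3) sem_e3 wf_e3.
have Ee4 := comm_blk (H _ sp_e4) sem_e4 wf_e4.
have El := comm_blk (H _ sp_l) sem_l wf_l.
have Ebe := comm_blk (H _ sp_be) sem_be wf_be.
have Edg := comm_blk (H _ sp_dg) sem_dg wf_dg.
have Ede := comm_blk (H _ sp_de) sem_de wf_de.
have Ega := comm_blk (H _ sp_ga) sem_ga wf_ga.
have Egal := comm_blk (H _ sp_gal) sem_gal wf_gal.
have Egdg := comm_blk (H _ sp_gdg) sem_gdg wf_gdg.
have Eal := comm_blk (H _ sp_al) sem_al wf_al.
have F45 : blk P 4 5 = 0 by sE Egdg 10%N 5%N; fin.
have F10 : blk P 1 0 = 0 by sE Egal 10%N 0%N; fin.
have F23 : blk P 2 3 = 0 by sE Ebe 2%N 5%N; rewrite F45; fin.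
have F01 : blk P 0 1 = 0 by sE El 2%N 1%N; rewrite F23; fin.
have F32 : blk P 3 2 = 0 by sE El 3%N 0%N; rewrite F10; fin.
have F54 : blk P 5 4 = 0 by sE Ebe 3%N 4%N; rewrite F32; fin.
have F67 : blk P 6 7 = 0 by sE Edg 6%N 5%N; rewrite F45; fin.
have F76 : blk P 7 6 = 0 by sE Edg 7%N 4%N; rewrite F54; fin.
have F89 : blk P 8 9 = 0 by sE Ega 8%N 5%N; rewrite F45; fin.
have F98 : blk P 9 8 = 0 by sE Ega 9%N 4%N; rewrite F54; fin.
have F02 : blk P 0 2 = 0 by sE El 0%N 0%N; fin.
have F03 : blk P 0 3 = 0 by sE El 0%N 1%N; fin.
have F12 : blk P 1 2 = 0 by sE El 1%N 0%N; fin.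
have F13 : blk P 1 3 = 0 by sE El 1%N 1%N; fin.
have F46 : blk P 4 6 = 0 by sE Edg 4%N 4%N; fin.
have F47 : blk P 4 7 = 0 by sE Edg 4%N 5%N; fin.
have F56 : blk P 5 6 = 0 by sE Edg 5%N 4%N; fin.
have F57 : blk P 5 7 = 0 by sE Edg 5%N 5%N; fin.
have F810 : blk P 8 10 = 0 by sE Ega 8%N 6%N; rewrite F46; fin.
have F910 : blk P 9 10 = 0 by sE Ega 9%N 6%N; rewrite F56; fin.
have F22 : blk P 2 2 = blk P 0 0 by sE El 2%N 0%N; fin.
have F44 : blk P 4 4 = blk P 0 0 by sE Ebe 2%N 4%N; rewrite F22; fin.
have F66 : blk P 6 6 = blk P 0 0 by sE Edg 6%N 4%N; rewrite F44; fin.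
have F88 : blk P 8 8 = blk P 0 0 by sE Ede 6%N 8%N; rewrite F66; fin.
have F1010 : blk P 10 10 = blk P 0 0 by sE Ega 10%N 6%N; rewrite F66; fin.
have F11 : blk P 1 1 = blk P 0 0 by sE Egal 10%N 1%N; rewrite F1010; fin.
have F33 : blk P 3 3 = blk P 0 0 by sE El 3%N 1%N; rewrite F11; fin.
have F55 : blk P 5 5 = blk P 0 0 by sE Ebe 3%N 5%N; rewrite F33; fin.
have F77 : blk P 7 7 = blk P 0 0 by sE Edg 7%N 5%N; rewrite F55; fin.
have F99 : blk P 9 9 = blk P 0 0 by sE Ede 7%N 9%N; rewrite F77; fin.
split.
- by sE Eal 7%N 0%N; rewrite F77 F10 mulmx0 addr0.
- by sE Eal 7%N 1%N; rewrite F76 F77 F01 F11 mulmx0 !add0r.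
move=> i j Hi Hj Hf.
case: i Hi Hf => [|[|[|[|[|[|[|[|[|[|[|i]]]]]]]]]]] Hi Hf;
  last by move: Hi; rewrite !ltnS ltn0.
all: case: j Hj Hf => [|[|[|[|[|[|[|[|[|[|[|j]]]]]]]]]]] Hj Hf;
  last (by move: Hj; rewrite !ltnS ltn0).
all: rewrite /= in Hf *.
all: try by [].
all: rewrite ?(F45, F10, F23, F01, F32, F54, F67, F76, F89, F98, F02, F03, F12, F13,
  F46, F47, F56, F57, F810, F910, F22, F44, F66, F88, F1010, F11, F33, F55, F77, F99).
all: try by [].
all: match goal with |- blk _ ?i ?j = _ =>
  first [ by sE Ee1 i j; fin | by sE Ee3 i j; fin | by sE Ee4 i j; fin ] end.
Qed.


Lemma blk_ext m m' (A B : 'M[k]_(11 * m', 11 * m)) :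
  (forall i j, (i < 11)%N -> (j < 11)%N -> blk A i j = blk B i j) -> A = B.
Proof.
move=> H; apply/matrixP => x y.
rewrite -[x](mxtens_unindexK x) -[y](mxtens_unindexK y).
move: (mxtens_unindex x) (mxtens_unindex y) => [i s] [j t].
have := congr1 (fun M : 'M[k]_(m', m) => M s t) (H i j (ltn_ord i) (ltn_ord j)).
by rewrite !mxE !inord_val.
Qed.

Lemma blkB m m' (A B : 'M[k]_(11 * m', 11 * m)) i j : blk (A - B) i j = blk A i j - blk B i j.
Proof. by apply/matrixP => s t; rewrite !mxE. Qed.

Lemma blk0 m m' i j : blk (0 : 'M[k]_(11 * m', 11 * m)) i j = 0.
Proof. by apply/matrixP => s t; rewrite !mxE. Qed.

Lemma blk1 m i j : (i < 11)%N -> (j < 11)%N ->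
  blk (1%:M : 'M[k]_(11 * m)) i j = if i == j then 1%:M else 0.
Proof.
move=> Hi Hj; apply/matrixP => s t; rewrite !mxE.
rewrite (inj_eq (can_inj (@mxtens_indexK 11 m))) xpair_eqE.
case: (i =P j) => [->|ne]; first by rewrite eqxx /= mxE.
suff -> : (inord i == inord j :> 'I_11) = false by rewrite mxE.
apply/negbTE/eqP => E; apply: ne.
by rewrite -(inordK Hi) -(inordK Hj) E.
Qed.

Lemma isfree_chain i l j : isfree i l -> isfree l j -> False.
Proof.
case: l => [|[|[|[|[|[|[|[|[|[|[|l]]]]]]]]]]];
  rewrite /isfree /= ?andbF ?orbF //.
Qed.

Lemma nil_blk m (E : 'M[k]_(11 * m)) :
  (forall i j, (i < 11)%N -> (j < 11)%N -> ~~ isfree i j -> blk E i j = 0) -> E *m E = 0.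
Proof.
move=> H; apply: blk_ext => i j Hi Hj; rewrite blk_mul blk0 big1 // => l _.
case: (boolP (isfree i l)) => Hil; last by rewrite H ?mul0mx.
rewrite (H l j) ?mulmx0 //; apply/negP => Hlj; exact: isfree_chain Hil Hlj.
Qed.

Lemma sum_row0 m m' c (P : 'M[k]_(11 * m', 11 * m)) (N : nat -> 'M[k]_(m, c)) :
  (forall l, (l < 11)%N -> l != 0%N -> blk P 0 l = 0) ->
  \sum_(l < 11) blk P 0 l *m N l = blk P 0 0 *m N 0%N.
Proof.
move=> H; rewrite big_ord_recl big1 ?addr0 // => l _.
by rewrite H ?mul0mx.
Qed.


Lemma struct_row0 m m' (P : 'M[k]_(11 * m', 11 * m)) :
  (forall i j, (i < 11)%N -> (j < 11)%N -> ~~ isfree i j ->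
     blk P i j = if i == j then blk P 0 0 else 0) ->
  forall l, (l < 11)%N -> l != 0%N -> blk P 0 l = 0.
Proof.
move=> Hs l Hl ne; rewrite Hs //; by rewrite eq_sym (negbTE ne).
Qed.

Lemma wild_main : wild_AnX k 5 [:: 3; 4]%N.
Proof.
exists 11%N, Phi; split; first exact: Phi_rep.
- move=> m X0 Y0 [Hm Hind]; split; first by rewrite muln_gt0.
  move=> E HE Hid.
  have [HX HY Hs] := inter_struct HE.
  have H0 := struct_row0 Hs.
  have Ha : blk E 0 0 *m blk E 0 0 = blk E 0 0.
    by rewrite -{3}Hid blk_mul (sum_row0 (fun l => blk E l 0) H0).
  case: (Hind _ HX HY Ha) => Ea.
    left; rewrite -Hid; apply: nil_blk => i j Hi Hj Hf.
    by rewrite Hs // Ea if_same.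
  right; apply/eqP; rewrite -subr_eq0 -[X in X == 0]opprB oppr_eq0; apply/eqP.
  have Hid' : (1%:M - E) *m (1%:M - E) = 1%:M - E.
    by rewrite mulmxBl mul1mx mulmxBr mulmx1 Hid subrr subr0.
  rewrite -Hid'; apply: nil_blk => i j Hi Hj Hf.
  by rewrite blkB Hs // Ea blk1 //; case: (i == j); rewrite subrr.
- move=> m m' X0 Y0 X1 Y1 [P [Q [PQ QP HP]]].
  have HQ : forall p, Spath 5 [:: 3; 4]%N p ->
      Q *m tensor_act Phi X1 Y1 p = tensor_act Phi X0 Y0 p *m Q.
    move=> p Hp; rewrite -[LHS]mulmx1 -PQ !mulmxA -[Q *m _ *m P]mulmxA -(HP p Hp).
    by rewrite !mulmxA QP mul1mx.
  have [HX HY Hs] := inter_struct HP.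
  have [_ _ Hs'] := inter_struct HQ.
  exists (blk P 0 0), (blk Q 0 0); split => //.
  + have := congr1 (fun M => blk M 0 0) PQ; rewrite /= blk_mul blk1 //.
    by rewrite (sum_row0 (fun l => blk Q l 0) (struct_row0 Hs)).
  + have := congr1 (fun M => blk M 0 0) QP; rewrite /= blk_mul blk1 //.
    by rewrite (sum_row0 (fun l => blk P l 0) (struct_row0 Hs')).
Qed.

End Main.

Theorem lemma4 (k : closedFieldType) : wild_AnX k 5 [:: 3%N; 4%N].
Proof. exact: wild_main. Qed.
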